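(* Let $K$ be an idempotent, linearly ordered, archimedian, commutative semiring. A series $S\in K[[X]]$ is rational if and only if it is a merge of finitely many ultimately geometric series. Equivalently, $S$ is rational if and only if there exist integers $\kappa\geq0$, $c\geq1$, a polynomial $P\in K[X]$ of degree less than $\kappa c$, and elements $u_0,\dots,u_{c-1},q_0,\dots,q_{c-1}\in K$ such that $$S=P\oplus X^{\kappa c}\Big(\bigoplus_{0\leq i\leq c-1}u_iX^i(q_iX^c)^*\Big).$$
   Context: $K$ is idempotent if $u\oplus u=u$; linearly ordered if $u\leq v\iff u\oplus v=v$ is a total order; archimedian if for all $u,v,\lambda,\mu\in K$, ($u\lambda^k\geq v\mu^k$ for all $k\geq0$) implies $v=\mathbb{0}$ or $\lambda\geq\mu$; commutative if $uv=vu$. $K[[X]]$ is the semiring of formal power series with coefficientwise sum and Cauchy product; $\langle S,X^k\rangle$ denotes the $k$-th coefficient of $S$; $U^*=\bigoplus_{k\ge0}U^k$ for $U$ with zero constant coefficient. Rational series: smallest subset of $K[[X]]$ containing $K[X]$ and closed under sum, product and star. A series $S$ is ultimately geometric if there exist an integer $\kappa$ and $\gamma\in K$ with $\langle S,X^{k+1}\rangle=\gamma\langle S,X^k\rangle$ for all $k\geq\kappa$. The merge of $c\ge1$ series $S^{(0)},\dots,S^{(c-1)}$ is the series $S^{(0)}(X^c)\oplus XS^{(1)}(X^c)\oplus\cdots\oplus X^{c-1}S^{(c-1)}(X^c)$ (its coefficient of $X^{kc+j}$ is $\langle S^{(j)},X^k\rangle$). *)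

(* Defs.v *)
From HB Require Import structures.
From mathcomp Require Import all_boot all_order all_algebra.
Set Implicit Arguments. Unset Strict Implicit. Unset Printing Implicit Defensive.
Import GRing.Theory.
Local Open Scope ring_scope.

Section Series.
Variable K : comPzSemiRingType.

Definition idempotent_sr := forall u : K, u + u = u.
Definition sr_le (u v : K) := u + v = v.
Definition linearly_ordered_sr := forall u v : K, sr_le u v \/ sr_le v u.
Definition archimedian_sr := forall u v lam mu : K,
  (forall k : nat, sr_le (v * mu ^+ k) (u * lam ^+ k)) -> v = 0 \/ sr_le mu lam.

Definition series := nat -> K.
Definition ser_add (S T : series) : series := fun n => S n + T n.
Definition ser_mul (S T : series) : series :=
  fun n => \sum_(i < n.+1) S i * T (n - i)%N.
Definition ser_C (a : K) : series := fun n => if n == 0%N then a else 0.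
Definition ser_Xn (m : nat) : series := fun n => if n == m then 1 else 0.
Definition ser_pow (U : series) (k : nat) : series := iter k (ser_mul U) (ser_C 1).
(* U^* = (+)_{k>=0} U^k; for U with zero constant coefficient, U^k has no
   coefficient of degree n for k > n, so the coefficient of X^n is the
   finite sum below. *)
Definition ser_star (U : series) : series :=
  fun n => \sum_(k < n.+1) ser_pow U k n.
Definition ser_bigsum (c : nat) (F : nat -> series) : series :=
  fun n => \sum_(i < c) F i n.

Definition is_poly (P : series) := exists N : nat, forall n, (N <= n)%N -> P n = 0.

Inductive rational : series -> Prop :=
| rat_poly P : is_poly P -> rational P
| rat_add S T : rational S -> rational T -> rational (ser_add S T)
| rat_mul S T : rational S -> rational T -> rational (ser_mul S T)
| rat_star U : U 0%N = 0 -> rational U -> rational (ser_star U).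

Definition ult_geometric (S : series) :=
  exists (kappa : nat) (gamma : K), forall k, (kappa <= k)%N -> S k.+1 = gamma * S k.

(* merge of Ss 0, ..., Ss (c-1): coefficient of X^(k c + j) is <Ss j, X^k> *)
Definition ser_merge (c : nat) (Ss : nat -> series) : series :=
  fun n => Ss (n %% c)%N (n %/ c)%N.

End Series.

(* Main.v *)
Require Import Defs.
From HB Require Import structures.
From mathcomp Require Import all_boot all_order all_algebra.
From Stdlib Require Import Classical ClassicalEpsilon FunctionalExtensionality.
Set Implicit Arguments. Unset Strict Implicit. Unset Printing Implicit Defensive.
Import GRing.Theory.
Local Open Scope ring_scope.


Definition ser (K : comPzSemiRingType) := series K.

Section Cl.
Variable T : Type.
Definition cl_eq (x y : T) : bool := if excluded_middle_informative (x = y) then true else false.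
Lemma cl_eqP : Equality.axiom cl_eq.
Proof. move=> x y; rewrite /cl_eq; case: excluded_middle_informative => h; constructor => //. Qed.
Definition cl_find (P : pred T) (n : nat) : option T :=
  match excluded_middle_informative (exists x, P x) with
  | left h => Some (proj1_sig (constructive_indefinite_description _ h))
  | right _ => None end.
Lemma cl_correct P n x : cl_find P n = Some x -> P x.
Proof. rewrite /cl_find; case: excluded_middle_informative => // h [<-].
by case: constructive_indefinite_description. Qed.
Lemma cl_complete (P : pred T) : (exists x, P x) -> exists n, cl_find P n.
Proof. move=> h; exists 0%N; rewrite /cl_find; case: excluded_middle_informative => //. Qed.
Lemma cl_ext (P Q : pred T) : P =1 Q -> cl_find P =1 cl_find Q.
Proof. move=> h; have -> : P = Q by apply: functional_extensionality. by []. Qed.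
End Cl.

HB.instance Definition _ (K : comPzSemiRingType) := hasDecEq.Build (ser K) (@cl_eqP _).
HB.instance Definition _ (K : comPzSemiRingType) :=
  hasChoice.Build (ser K) (@cl_correct _) (@cl_complete _) (@cl_ext _).

Section Ring.
Variable K : comPzSemiRingType.
Local Notation sr := (ser K).

Lemma serP (S T : sr) : (forall n, S n = T n) -> S = T.
Proof. by move=> h; apply: functional_extensionality. Qed.

Fact ser_addA : associative (@ser_add K).
Proof. by move=> a b c; apply: serP => n; rewrite /ser_add addrA. Qed.
Fact ser_addC : commutative (@ser_add K).
Proof. by move=> a b; apply: serP => n; rewrite /ser_add addrC. Qed.
Fact ser_add0 : left_id (ser_C (0:K)) (@ser_add K).
Proof. by move=> a; apply: serP => n; rewrite /ser_add /ser_C; case: eqP; rewrite add0r. Qed.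

HB.instance Definition _ := GRing.isNmodule.Build sr ser_addA ser_addC ser_add0.

Lemma ser_mul_rev (p q : series K) i :
  ser_mul p q i = \sum_(j < i.+1) p (i - j)%N * q j.
Proof.
rewrite /ser_mul (reindex_inj rev_ord_inj) /=.
by apply: eq_bigr => j _; rewrite (sub_ordK j).
Qed.

Fact ser_mulA : associative (@ser_mul K).
Proof.
move=> p q r; apply: serP=> i; rewrite {1}/ser_mul ser_mul_rev.
pose coef3 j k := p j * (q (i - j - k)%N * r k).
transitivity (\sum_(j < i.+1) \sum_(k < i.+1 | (k <= i - j)%N) coef3 j k).
  apply: eq_bigr => /= j _; rewrite ser_mul_rev big_distrr /=.
  by rewrite (big_ord_narrow_leq (leq_subr _ _)).
rewrite (exchange_big_dep predT) //=; apply: eq_bigr => k _.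
transitivity (\sum_(j < i.+1 | (j <= i - k)%N) coef3 j k).
  apply: eq_bigl => j; rewrite -ltnS -(ltnS j) -!subSn ?leq_ord //.
  by rewrite -subn_gt0 -(subn_gt0 j) -!subnDA addnC.
rewrite (big_ord_narrow_leq (leq_subr _ _)) /ser_mul big_distrl /=.
by apply: eq_bigr => j _; rewrite /coef3 -!subnDA addnC mulrA.
Qed.

Fact ser_mulC : commutative (@ser_mul K).
Proof. by move=> p q; apply: serP => i; rewrite ser_mul_rev /ser_mul; apply: eq_bigr => j _; rewrite mulrC. Qed.

Fact ser_mul1 : left_id (ser_C (1:K)) (@ser_mul K).
Proof.
move=> p; apply: serP => i; rewrite /ser_mul big_ord_recl subn0 /ser_C /=.
by rewrite big1 => [|j _]; rewrite ?mul1r ?addr0 // mul0r.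
Qed.

Fact ser_mulDl : left_distributive (@ser_mul K) (@ser_add K).
Proof.
move=> p q r; apply: serP => i; rewrite /ser_mul /ser_add -big_split /=.
by apply: eq_bigr => j _; rewrite mulrDl.
Qed.

Fact ser_mul0 : left_zero (ser_C (0:K)) (@ser_mul K).
Proof.
move=> p; apply: serP => i; rewrite /ser_mul /ser_C /= if_same big1 // => j _.
by rewrite if_same mul0r.
Qed.

HB.instance Definition _ := GRing.Nmodule_isComPzSemiRing.Build sr
  ser_mulA ser_mulC ser_mul1 ser_mulDl ser_mul0.

Lemma ser_addE (S T : sr) : ser_add S T = S + T. Proof. by []. Qed.
Lemma ser_mulE (S T : sr) : ser_mul S T = S * T. Proof. by []. Qed.
Lemma ser_C1E : ser_C (1:K) = 1 :> sr. Proof. by []. Qed.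
Lemma ser_C0E : ser_C (0:K) = 0 :> sr. Proof. by []. Qed.
Lemma addsE (S T : sr) n : (S + T) n = S n + T n. Proof. by []. Qed.
Lemma mulsE (S T : sr) n : (S * T) n = \sum_(i < n.+1) S i * T (n - i)%N. Proof. by []. Qed.
Lemma zerosE n : (0 : sr) n = 0. Proof. rewrite /GRing.zero /= /ser_C. by case: (n == 0%N). Qed.
Lemma onesE n : (1 : sr) n = if n == 0%N then 1 else 0. Proof. by []. Qed.

End Ring.



Section Basic.
Variable K : comPzSemiRingType.
Local Notation sr := (ser K).
Local Notation C a := (@ser_C K a : sr).
Local Notation Xn m := (ser_Xn K m : sr).
Local Notation star U := (@ser_star K U : sr).

Lemma sumsE I (r : seq I) (P : pred I) (F : I -> sr) n :
  (\sum_(i <- r | P i) F i) n = \sum_(i <- r | P i) F i n.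
Proof.
by apply: (big_morph (fun S : sr => S n)) => [S T|]; rewrite ?addsE ?zerosE.
Qed.

Lemma mulCs a (S : sr) n : (C a * S) n = a * S n.
Proof.
rewrite mulsE big_ord_recl /= subn0 /ser_C /= big1 ?addr0 // => j _.
by rewrite mul0r.
Qed.

Lemma mulXs m (S : sr) n : (Xn m * S) n = if (m <= n)%N then S (n - m)%N else 0.
Proof.
rewrite mulsE /ser_Xn; case: leqP => hm.
  have hm' : (m < n.+1)%N by [].
  rewrite (bigD1 (Ordinal hm')) //= eqxx mul1r big1 ?addr0 // => j hj.
  case: eqP => [hjm|]; last by rewrite mul0r.
  by case/eqP: hj; apply: val_inj.
rewrite big1 // => j _; case: eqP => [hjm|]; last by rewrite mul0r.
by have := ltn_ord j; rewrite hjm ltnS leqNgt hm.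
Qed.

Lemma mul0sE (S T : sr) : (S * T) 0%N = S 0%N * T 0%N.
Proof. by rewrite mulsE big_ord_recl big_ord0 addr0 subn0. Qed.

Lemma CE a n : C a n = if n == 0%N then a else 0. Proof. by []. Qed.
Lemma XnE m n : Xn m n = if n == m then 1 else 0. Proof. by []. Qed.

Lemma C_mul a b : C a * C b = C (a * b).
Proof. by apply: serP => n; rewrite mulCs !CE; case: eqP; rewrite ?mulr0. Qed.
Lemma C_add a b : C a + C b = C (a + b).
Proof. by apply: serP => n; rewrite addsE !CE; case: eqP; rewrite ?addr0. Qed.
Lemma C0 : C 0 = 0. Proof. by []. Qed.
Lemma C1 : C 1 = 1. Proof. by []. Qed.
Lemma X0 : Xn 0 = 1. Proof. by apply: serP => n; rewrite XnE onesE. Qed.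
Lemma X_add s t : Xn s * Xn t = Xn (s + t).
Proof.
apply: serP => n; rewrite mulXs !XnE; case: leqP => h.
  by rewrite -(eqn_add2r s) subnK // addnC.
case: eqP => // e; move: h; rewrite e; rewrite ltnNge leq_addr //.
Qed.

Lemma ser_powE (U : sr) k : ser_pow U k = U ^+ k.
Proof. elim: k => // k IH; rewrite exprS -IH. by []. Qed.

Lemma pow_vanish (U : sr) k n : U 0%N = 0 -> (n < k)%N -> (U ^+ k) n = 0.
Proof.
move=> U0; elim: k n => // k IH n hn; rewrite exprS mulsE big1 // => i _.
case: (posnP i) => [->|ip]; first by rewrite U0 mul0r.
rewrite IH ?mulr0 // ltn_subLR; last by rewrite -ltnS.
apply: leq_trans hn _; by rewrite -add1n leq_add2r.
Qed.

Lemma star_ext (U : sr) n M : U 0%N = 0 -> (n < M)%N ->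
  star U n = \sum_(k < M) (U ^+ k) n.
Proof.
move=> U0 hM; rewrite /ser_star -(subnKC hM) big_split_ord /=.
rewrite [X in _ = _ + X]big1 ?addr0 => [|i _]; last by rewrite pow_vanish // ltn_addr.
by apply: eq_bigr => i _; rewrite ser_powE.
Qed.

Lemma star_fix (U : sr) : U 0%N = 0 -> star U = 1 + U * star U.
Proof.
move=> U0; apply: serP => n; rewrite addsE (star_ext (M := n.+2)) //.
rewrite big_ord_recl expr0; congr (_ + _); rewrite mulsE.
transitivity (\sum_(i < n.+1) \sum_(k < n.+1) U i * (U ^+ k) (n - i)%N); last first.
  apply: eq_bigr => i _; rewrite (star_ext (M := n.+1)) ?big_distrr //.
  by rewrite ltnS leq_subr.
rewrite exchange_big /=; apply: eq_bigr => k _.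
by rewrite /bump /= exprS mulsE.
Qed.

Lemma fix_unique (U W1 W2 : sr) : U 0%N = 0 -> W1 = 1 + U * W1 -> W2 = 1 + U * W2 -> W1 = W2.
Proof.
move=> U0 h1 h2; apply: serP => n; elim: n {-2}n (leqnn n) => [|n IH] m hm.
  move: hm; rewrite leqn0 => /eqP ->.
  by rewrite h1 h2 !addsE !mul0sE U0 !mul0r.
rewrite h1 h2 !addsE !mulsE !big_ord_recl U0 !mul0r !add0r; congr (_ + _).
apply: eq_bigr => i _; rewrite IH //.
rewrite leq_subLR; apply: (leq_trans hm); by rewrite -{1}(add0n n) ltn_add2r.
Qed.

Lemma star_unique (U W : sr) : U 0%N = 0 -> W = 1 + U * W -> W = star U.
Proof. by move=> U0 h; apply: (fix_unique U0 h (star_fix U0)). Qed.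

Lemma star0 : star (0 : sr) = 1.
Proof. by symmetry; apply: star_unique; rewrite ?zerosE // mul0r addr0. Qed.

Hypothesis Hidem : idempotent_sr K.

Lemma sidem (S : sr) : S + S = S.
Proof. by apply: serP => n; rewrite addsE Hidem. Qed.

Lemma star_add (A B : sr) : A 0%N = 0 -> B 0%N = 0 ->
  star (A + B) = star A * star B.
Proof.
move=> A0 B0; symmetry; apply: star_unique; first by rewrite addsE A0 B0 addr0.
set a := star A; set b := star B.
set x := A * a; set y := B * b.
have ha : a = 1 + x by apply: star_fix.
have hb : b = 1 + y by apply: star_fix.
have L : a * b = 1 + (x + y + x * y).
  rewrite {1}ha {1}hb mulrDl !mulrDr !mul1r mulr1.
  by rewrite -!addrA; congr (_ + _); rewrite addrCA.
have e1 : A * (a * b) = x + x * y by rewrite {1}hb mulrDr mulr1 mulrDr mulrA.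
have e2 : B * (a * b) = y + x * y by rewrite {1}ha mulrDl mul1r mulrDr mulrCA.
rewrite mulrDl e1 e2 L; congr (_ + _).
by rewrite addrACA sidem.
Qed.

Lemma star_idem (A : sr) : A 0%N = 0 -> star A * star A = star A.
Proof. by move=> A0; rewrite -star_add // sidem. Qed.

End Basic.



Section Atoms.
Variable K : comPzSemiRingType.
Local Notation sr := (ser K).
Local Notation C a := (@ser_C K a : sr).
Local Notation Xn m := (ser_Xn K m : sr).
Local Notation star U := (@ser_star K U : sr).

Definition atom (a : K) s q c : sr := C a * Xn s * star (C q * Xn c).

Lemma CX0 q c : (0 < c)%N -> (C q * Xn c) 0%N = 0.
Proof. by case: c => // c _; rewrite mulCs XnE mulr0. Qed.

Lemma starC_eval c q n : (0 < c)%N ->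
  star (C q * Xn c) n = if (c %| n)%N then q ^+ (n %/ c) else 0.
Proof.
move=> c0.
pose g : sr := fun n => if (c %| n)%N then q ^+ (n %/ c) else 0.
suff <- : g = star (C q * Xn c) by [].
apply: star_unique; first exact: CX0.
apply: serP => n'; rewrite addsE onesE -mulrA mulCs mulXs /g.
case: n' => [|m]; first by rewrite dvdn0 div0n expr0 /= leqNgt c0 mulr0 addr0.
rewrite /= add0r; case: leqP => hc.
  move: (subnK hc); set k := (m.+1 - c)%N => <-.
  rewrite dvdn_addl // divnDr // divnn c0 addn1 exprS.
  by case: (c %| k)%N; rewrite ?mulr0.
by rewrite gtnNdvd // mulr0.
Qed.

Lemma atom_eval a s q c n : (0 < c)%N ->
  atom a s q c n = if (s <= n)%N && (c %| n - s)%N then a * q ^+ ((n - s) %/ c) else 0.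
Proof.
move=> c0; rewrite /atom -mulrA mulCs mulXs.
case: leqP => h /=; last by rewrite mulr0.
by rewrite starC_eval //; case: ifP; rewrite ?mulr0.
Qed.

Lemma atom_q0 a s c : (0 < c)%N -> atom a s 0 c = C a * Xn s.
Proof. by move=> c0; rewrite /atom (_ : C 0 * Xn c = 0) ?star0 ?mulr1 //; exact: (mul0r (Xn c)). Qed.

Hypothesis Hidem : idempotent_sr K.

Lemma atom_mul a s q b t r c : (0 < c)%N ->
  atom a s q c * atom b t r c = atom (a * b) (s + t) (q + r) c.
Proof.
move=> c0; rewrite /atom mulrACA [C a * Xn s * _]mulrACA C_mul X_add.
by rewrite -star_add ?CX0 // -mulrDl C_add.
Qed.

End Atoms.



Lemma fin_choice (A : Type) (a0 : A) c (P : nat -> A -> Prop) :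
  (forall j, (j < c)%N -> exists x, P j x) -> exists f : nat -> A, forall j, (j < c)%N -> P j (f j).
Proof.
elim: c => [|c IH] h; first by exists (fun _ => a0).
case: IH => [j hj|f hf]; first by apply: h; rewrite ltnS ltnW.
case: (h c (ltnSn c)) => x hx.
exists (fun j => if j == c then x else f j) => j; rewrite ltnS leq_eqVlt.
by case: eqP => [->|_] //= /hf.
Qed.

Lemma leq_bigsum c (F : nat -> nat) j : (j < c)%N -> (F j <= \sum_(i < c) F i)%N.
Proof. by move=> hj; rewrite (bigD1 (Ordinal hj)) //= leq_addr. Qed.

Section G.
Variable K : comPzSemiRingType.
Local Notation sr := (ser K).
Local Notation C a := (@ser_C K a : sr).
Local Notation Xn m := (ser_Xn K m : sr).
Local Notation star U := (@ser_star K U : sr).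

Definition Gp c N (g : nat -> K) (S : sr) :=
  forall n, (N <= n)%N -> S (n + c)%N = g (n %% c)%N * S n.
Definition G (S : sr) := exists c N g, (0 < c)%N /\ Gp c N g S.

Lemma Gp_iter c N g S n k : Gp c N g S -> (N <= n)%N ->
  S (n + k * c)%N = g (n %% c)%N ^+ k * S n.
Proof.
move=> hG hn; elim: k => [|k IH]; first by rewrite mul0n addn0 expr0 mul1r.
rewrite mulSn addnA addnAC hG; last by rewrite (leq_trans hn) // leq_addr.
have -> : ((n + k * c) %% c = n %% c)%N by rewrite addnC modnMDl.
by rewrite IH exprS mulrA.
Qed.

Lemma Gp_period c N g S m : (0 < m)%N -> Gp c N g S ->
  Gp (c * m) N (fun j => g (j %% c)%N ^+ m) S.
Proof.
move=> m0 hG n hn; rewrite mulnC (Gp_iter _ hG hn).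
by rewrite modn_dvdm // dvdn_mull.
Qed.

Lemma Gp_mono c N N' g S : (N <= N')%N -> Gp c N g S -> Gp c N' g S.
Proof. by move=> hN hG n hn; apply: hG; apply: leq_trans hn. Qed.

Lemma G_poly (P : sr) N : (forall n, (N <= n)%N -> P n = 0) -> G P.
Proof.
move=> h; exists 1%N, N, (fun _ => 0); split => // n hn.
by rewrite mul0r h // (leq_trans hn) // leq_addr.
Qed.

Lemma G_zero : G 0.
Proof. by apply: (@G_poly _ 0) => n _; rewrite zerosE. Qed.

Lemma G_one : G 1.
Proof. by apply: (@G_poly _ 1) => n; rewrite onesE; case: n. Qed.

Lemma G_atom a s q c : (0 < c)%N -> G (atom a s q c).
Proof.
move=> c0; exists c, s, (fun _ => q); split => // n hn.
rewrite !atom_eval // hn (leq_trans hn (leq_addr _ _)) /= -addnBAC //.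
rewrite dvdn_addl // divnDr // divnn c0 addn1 exprS.
by case: (c %| n - s)%N; rewrite ?mulr0 // mulrCA.
Qed.

Hypothesis Hidem : idempotent_sr K.
Hypothesis Hlin : linearly_ordered_sr K.

Lemma le_trans (x y z : K) : sr_le x y -> sr_le y z -> sr_le x z.
Proof. by rewrite /sr_le => h1 h2; rewrite -h2 addrA h1. Qed.
Lemma le_mulr (x y z : K) : sr_le x y -> sr_le (z * x) (z * y).
Proof. by rewrite /sr_le => h; rewrite -mulrDr h. Qed.
Lemma le_mull (x y z : K) : sr_le x y -> sr_le (x * z) (y * z).
Proof. by rewrite /sr_le => h; rewrite -mulrDl h. Qed.

Lemma add_res c N g h (S T : sr) j : (0 < c)%N -> Gp c N g S -> Gp c N h T ->
  sr_le (g j) (h j) ->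
  exists NR : nat * K, forall n, (NR.1 <= n)%N -> (n %% c)%N = j ->
     (S + T) (n + c)%N = NR.2 * (S + T) n.
Proof.
move=> c0 hS hT hgh.
case: (classic (exists n, (N <= n)%N /\ (n %% c)%N = j /\ sr_le (S n) (T n))).
  case=> n0 [hn0 [hj hle]].
  have hk : forall k, sr_le (S (n0 + k * c)%N) (T (n0 + k * c)%N).
    elim=> [|k IH]; first by rewrite mul0n addn0.
    have hN : (N <= n0 + k * c)%N by rewrite (leq_trans hn0) // leq_addr.
    rewrite mulSn addnA addnAC hS // hT //.
    have -> : ((n0 + k * c) %% c = j)%N by rewrite addnC modnMDl.
    apply: le_trans (le_mull _ hgh) (le_mulr _ IH).
  have hall : forall n, (n0 <= n)%N -> (n %% c)%N = j -> sr_le (S n) (T n).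
    move=> n hn hnj.
    have hd : (c %| n - n0)%N by rewrite -eqn_mod_dvd // hnj hj.
    by rewrite -(subnKC hn) -(divnK hd).
  exists (n0, h j) => n hn hnj /=.
  rewrite !addsE (hall n) // (hall (n + c)%N) ?modnDr //; last by rewrite (leq_trans hn) // leq_addr.
  by rewrite hT ?hnj // (leq_trans hn0 hn).
move=> hno; exists (N, g j) => n hn hnj /=.
have hall : forall n, (N <= n)%N -> (n %% c)%N = j -> (S + T) n = S n.
  move=> m hm hmj; rewrite addsE.
  case: (Hlin (S m) (T m)) => [hl|hl]; last by rewrite addrC hl.
  by case: hno; exists m.
by rewrite !hall ?modnDr // ?hS ?hnj // (leq_trans hn) // leq_addr.
Qed.

Lemma G_add S T : G S -> G T -> G (S + T).
Proof.
case=> [c1 [N1 [g1 [c10 h1]]]] [c2 [N2 [g2 [c20 h2]]]].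
set c := (c1 * c2)%N.
have c0 : (0 < c)%N by rewrite muln_gt0 c10.
have hS := Gp_mono (leq_addr N2 N1) (Gp_period c20 h1).
have hT := Gp_mono (leq_addl N1 N2) (Gp_period c10 h2).
rewrite mulnC -/c in hT.
set g := (fun j => _) in hS; set h := (fun j => _) in hT.
have hres : forall j, (j < c)%N -> exists NR : nat * K, forall n, (NR.1 <= n)%N ->
    (n %% c)%N = j -> (S + T) (n + c)%N = NR.2 * (S + T) n.
  move=> j hj; case: (Hlin (g j) (h j)) => hl; first exact: add_res hS hT hl.
  rewrite addrC; exact: add_res hT hS hl.
case: (fin_choice (0%N, 0) hres) => f hf.
exists c, (\sum_(j < c) (f j).1)%N, (fun j => (f j).2); split => // n hn.
have hj : (n %% c < c)%N by rewrite ltn_pmod.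
apply: hf => //; apply: leq_trans hn; exact: (leq_bigsum (fun j => (f j).1) hj).
Qed.

End G.



Section E.
Variable K : comPzSemiRingType.
Local Notation sr := (ser K).
Local Notation C a := (@ser_C K a : sr).
Local Notation Xn m := (ser_Xn K m : sr).
Local Notation star U := (@ser_star K U : sr).

Lemma CXE a m n : (C a * Xn m) n = if n == m then a else 0.
Proof. by rewrite mulCs XnE; case: eqP; rewrite ?mulr1 ?mulr0. Qed.

Lemma geo_sum c M (u q : nat -> K) n : (0 < c)%N -> (M <= n)%N ->
  \sum_(j < c) atom (u j) (M + j) (q j) c n =
  u ((n - M) %% c)%N * q ((n - M) %% c)%N ^+ ((n - M) %/ c).
Proof.
move=> c0 hM.
rewrite (bigD1 (Ordinal (ltn_pmod (n - M) c0))) //= big1 ?addr0 => [|j hj].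
  rewrite atom_eval // -leq_subRL // leq_mod /= subnDA.
  have e : (n - M - (n - M) %% c = (n - M) %/ c * c)%N.
    by rewrite {1}(divn_eq (n - M) c) addnK.
  by rewrite e dvdn_mull // mulnK.
rewrite atom_eval //; case: ifP => // /andP [h1 h2]; case/eqP: hj.
apply: val_inj => /=.
rewrite -leq_subRL // in h1; rewrite subnDA in h2.
by rewrite -(subnK h1) -(divnK h2) modnMDl modn_small.
Qed.

Lemma geo_sum_low c M (u q : nat -> K) n : (0 < c)%N -> (n < M)%N ->
  \sum_(j < c) atom (u j) (M + j) (q j) c n = 0.
Proof.
move=> c0 hM; rewrite big1 // => j _; rewrite atom_eval //.
by rewrite leqNgt (leq_trans hM) ?leq_addr.
Qed.

Lemma decomp c N g (S : sr) : (0 < c)%N -> Gp c N g S ->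
  S = \sum_(m < N) C (S m) * Xn m + \sum_(j < c) atom (S (N + j)%N) (N + j) (g ((N + j) %% c)%N) c.
Proof.
move=> c0 hG; apply: serP => n; rewrite addsE !sumsE.
case: (ltnP n N) => hn.
  rewrite (@geo_sum_low c N (fun j => S (N + j)%N) (fun j => g ((N + j) %% c)%N) n) // addr0 (bigD1 (Ordinal hn)) //= CXE eqxx big1 ?addr0 // => m hm.
  rewrite CXE; case: eqP => // e; case/eqP: hm; exact: val_inj.
rewrite big1 ?add0r => [|m _]; last first.
  by rewrite CXE; case: eqP => // e; have := ltn_ord m; rewrite -e ltnNge hn.
rewrite (@geo_sum c N (fun j => S (N + j)%N) (fun j => g ((N + j) %% c)%N) n) //.
have e : n = (N + (n - N) %% c + (n - N) %/ c * c)%N.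
  by rewrite -addnA [X in (N + X)%N]addnC -divn_eq subnKC.
by rewrite [in LHS]e (Gp_iter _ hG) ?leq_addr // mulrC.
Qed.

Definition AS c (X : sr) := exists l : seq (K * nat * K),
  X = \sum_(t <- l) atom t.1.1 t.1.2 t.2 c.

Lemma AS_zero c : AS c 0.
Proof. by exists [::]; rewrite big_nil. Qed.
Lemma AS_atom c a s q : AS c (atom a s q c).
Proof. by exists [:: (a, s, q)]; rewrite big_seq1. Qed.
Lemma AS_add c X Y : AS c X -> AS c Y -> AS c (X + Y).
Proof. by case=> l1 -> [l2 ->]; exists (l1 ++ l2); rewrite big_cat. Qed.
Lemma AS_sum c I (r : seq I) (F : I -> sr) : (forall i, AS c (F i)) -> AS c (\sum_(i <- r) F i).
Proof.
move=> h; elim: r => [|i r IH]; first by rewrite big_nil; apply: AS_zero.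
by rewrite big_cons; apply: AS_add.
Qed.

Hypothesis Hidem : idempotent_sr K.
Hypothesis Hlin : linearly_ordered_sr K.

Lemma AS_G c X : (0 < c)%N -> AS c X -> G X.
Proof.
move=> c0 [l ->]; elim: l => [|t l IH]; first by rewrite big_nil; apply: G_zero.
by rewrite big_cons; apply: G_add => //; apply: G_atom.
Qed.

Lemma AS_mul c X Y : (0 < c)%N -> AS c X -> AS c Y -> AS c (X * Y).
Proof.
move=> c0 [l1 ->] [l2 ->]; rewrite big_distrl /=; apply: AS_sum => t1.
rewrite big_distrr /=; apply: AS_sum => t2; rewrite atom_mul //; apply: AS_atom.
Qed.

Lemma Gp_AS c N g S : (0 < c)%N -> Gp c N g S -> AS c S.
Proof.
move=> c0 hG; rewrite (decomp c0 hG); apply: AS_add.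
  apply: AS_sum => m; rewrite -(atom_q0 _ _ c0); apply: AS_atom.
apply: AS_sum => j; apply: AS_atom.
Qed.

Lemma G_mul (S T : sr) : G S -> G T -> G (S * T).
Proof.
case=> [c1 [N1 [g1 [c10 h1]]]] [c2 [N2 [g2 [c20 h2]]]].
have c0 : (0 < c1 * c2)%N by rewrite muln_gt0 c10.
have hS := Gp_period c20 h1.
have hT := Gp_period c10 h2; rewrite mulnC in hT.
apply: (AS_G c0); apply: AS_mul => //; [exact: Gp_AS hS | exact: Gp_AS hT].
Qed.

Lemma G_sum n (F : nat -> sr) : (forall i, (i < n)%N -> G (F i)) -> G (\sum_(i < n) F i).
Proof.
elim: n => [|n IH] h; first by rewrite big_ord0; apply: G_zero.
rewrite big_ord_recr /=; apply: G_add => //; last exact: h.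
by apply: IH => i hi; apply: h; rewrite ltnS ltnW.
Qed.

Lemma G_prod n (F : nat -> sr) : (forall i, (i < n)%N -> G (F i)) -> G (\prod_(i < n) F i).
Proof.
elim: n => [|n IH] h; first by rewrite big_ord0; apply: G_one.
rewrite big_ord_recr /=; apply: G_mul => //; last exact: h.
by apply: IH => i hi; apply: h; rewrite ltnS ltnW.
Qed.

Lemma star_big n (F : nat -> sr) : (forall i, (i < n)%N -> F i 0%N = 0) ->
  star (\sum_(i < n) F i) = \prod_(i < n) star (F i).
Proof.
elim: n => [|n IH] h; first by rewrite !big_ord0 star0.
rewrite !big_ord_recr /= star_add //; last exact: h.
  by rewrite IH // => i hi; apply: h; rewrite ltnS ltnW.
by rewrite sumsE big1 // => i _; apply: h; rewrite ltnS ltnW.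
Qed.

Lemma star_atom a s q c : (0 < s)%N -> (0 < c)%N ->
  star (C a * Xn s * star (C q * Xn c)) =
  1 + C a * Xn s * star (C a * Xn s) * star (C q * Xn c).
Proof.
move=> s0 c0; set A := C a * Xn s; set Y := star (C q * Xn c).
have A0 : A 0%N = 0 by rewrite /A CXE; case: eqP => // e; move: s0; rewrite -e.
symmetry; apply: star_unique; first by rewrite mul0sE A0 mul0r.
have hA : star A = 1 + A * star A by apply: star_fix.
have hY : Y * Y = Y by apply: star_idem => //; apply: CX0.
congr (_ + _); rewrite mulrDr mulr1.
rewrite [in LHS]hA mulrDr mulr1 mulrDl; congr (_ + _).
by rewrite -[in LHS]hY mulrACA.
Qed.

Lemma G_starC q c : (0 < c)%N -> G (star (C q * Xn c)).
Proof.
move=> c0; have -> : star (C q * Xn c) = atom 1 0 q c by rewrite /atom C1 X0 !mul1r.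
exact: G_atom.
Qed.

Lemma G_star (U : sr) : G U -> U 0%N = 0 -> G (star U).
Proof.
case=> [c [N0 [g [c0 hG0]]]] U0.
have hG := Gp_mono (leq_addl 1 N0) hG0; set N := (1 + N0)%N in hG.
have N1 : (0 < N)%N by [].
rewrite (decomp c0 hG).
have Q0 : (\sum_(j < c) atom (U (N + j)%N) (N + j) (g ((N + j) %% c)%N) c) 0%N = 0.
  by rewrite sumsE (@geo_sum_low c N (fun j => U (N + j)%N) (fun j => g ((N + j) %% c)%N)).
rewrite star_add //; last first.
  move: U0; rewrite {1}(decomp c0 hG) addsE Q0 addr0 => <-; by [].
apply: G_mul.
  rewrite (@star_big N (fun m => C (U m) * Xn m)) => [|m hm]; last first.
    by rewrite CXE; case: m hm => // _; rewrite U0.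
  apply: (@G_prod N (fun m => star (C (U m) * Xn m))) => m hm; case: m hm => [_|m _].
    rewrite U0 (_ : C 0 * Xn 0 = 0) ?star0; first exact: G_one.
    exact: (mul0r (Xn 0)).
  have -> : star (C (U m.+1) * Xn m.+1) = atom 1 0 (U m.+1) m.+1.
    by rewrite /atom C1 X0 !mul1r.
  exact: G_atom.
rewrite (@star_big c (fun j => atom (U (N + j)%N) (N + j) (g ((N + j) %% c)%N) c)) => [|j _]; last first.
  by rewrite atom_eval // addn_gt0 N1.
apply: (@G_prod c (fun j => star (atom (U (N + j)%N) (N + j) (g ((N + j) %% c)%N) c))) => j _; rewrite /atom star_atom ?addn_gt0 ?N1 //.
apply: G_add => //; first exact: G_one.
apply: G_mul; last exact: G_starC.
apply: G_mul; first by rewrite -(atom_q0 _ _ (ltn0Sn 0)); apply: G_atom.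
by apply: G_starC; rewrite addn_gt0 N1.
Qed.

Lemma rational_G (S : series K) : rational S -> G (S : sr).
Proof.
elim => [P [N hP]|S1 S2 _ h1 _ h2|S1 S2 _ h1 _ h2|U U0 _ hU].
- exact: G_poly hP.
- exact: G_add.
- exact: G_mul.
- exact: G_star.
Qed.

End E.



Section F.
Variable K : comPzSemiRingType.
Local Notation sr := (ser K).
Local Notation C a := (@ser_C K a : sr).
Local Notation Xn m := (ser_Xn K m : sr).
Local Notation star U := (@ser_star K U : sr).

Lemma bigsumE c (F : nat -> series K) : ser_bigsum c F = \sum_(i < c) (F i : sr).
Proof. by apply: serP => n; rewrite sumsE. Qed.

Lemma rational_bigsum c (F : nat -> series K) :
  (forall i, (i < c)%N -> rational (F i)) -> rational (ser_bigsum c F).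
Proof.
elim: c => [|c IH] h.
  by apply: rat_poly; exists 0%N => n _; rewrite /ser_bigsum big_ord0.
have -> : ser_bigsum c.+1 F = ser_add (ser_bigsum c F) (F c).
  by apply: serP => n; rewrite /ser_bigsum big_ord_recr.
apply: rat_add; last exact: h.
by apply: IH => i hi; apply: h; rewrite ltnS ltnW.
Qed.

Lemma poly_C (a : K) : rational (ser_C a).
Proof. by apply: rat_poly; exists 1%N => n; rewrite /ser_C; case: n. Qed.
Lemma poly_X m : rational (ser_Xn K m).
Proof.
apply: rat_poly; exists m.+1 => n hn; rewrite /ser_Xn; case: eqP => // e.
by move: hn; rewrite e ltnn.
Qed.

Lemma form2_rational (S : series K) kappa c (P : series K) (u q : nat -> K) :
  (1 <= c)%N -> (forall n, (kappa * c <= n)%N -> P n = 0) ->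
  S = ser_add P (ser_mul (ser_Xn K (kappa * c))
        (ser_bigsum c (fun i => ser_mul (ser_mul (ser_C (u i)) (ser_Xn K i))
                           (ser_star (ser_mul (ser_C (q i)) (ser_Xn K c)))))) ->
  rational S.
Proof.
move=> c0 hP ->; apply: rat_add; first by apply: rat_poly; exists (kappa * c)%N.
apply: rat_mul; first exact: poly_X.
apply: rational_bigsum => i _; apply: rat_mul; first by apply: rat_mul; [exact: poly_C|exact: poly_X].
apply: rat_star; first exact: (CX0 (q i) c0).
by apply: rat_mul; [exact: poly_C|exact: poly_X].
Qed.

Lemma G_form2 (S : sr) c N g : (0 < c)%N -> Gp c N g S ->
  exists (kappa c : nat) (P : series K) (u q : nat -> K),
       (1 <= c)%N /\ (forall n, (kappa * c <= n)%N -> P n = 0) /\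
       S = ser_add P
             (ser_mul (ser_Xn K (kappa * c))
                (ser_bigsum c (fun i =>
                   ser_mul (ser_mul (ser_C (u i)) (ser_Xn K i))
                           (ser_star (ser_mul (ser_C (q i)) (ser_Xn K c)))))).
Proof.
move=> c0 hG.
exists N, c, (fun n => if (n < N * c)%N then S n else 0), (fun i => S (N * c + i)%N), g.
split => //; split; first by move=> n hn; rewrite ltnNge hn.
rewrite bigsumE ser_addE ser_mulE.
apply: serP => n; rewrite addsE mulXs.
case: ltnP => hn; first by rewrite addr0.
rewrite add0r sumsE.
have := @geo_sum K c 0 (fun i => S (N * c + i)%N) g (n - N * c) c0 (leq0n _).
rewrite subn0 => /= ->.
set m := (n - N * c)%N.
have e : n = (N * c + m %% c + m %/ c * c)%N.
  by rewrite -addnA [X in (_ + X)%N]addnC -divn_eq subnKC.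
rewrite [in LHS]e (Gp_iter _ hG); last by rewrite (leq_trans (leq_pmulr _ c0)) // leq_addr.
by rewrite modnMDl modn_mod mulrC.
Qed.

Lemma G_form1 (S : sr) c N g : (0 < c)%N -> Gp c N g S ->
  exists (c : nat) (Ss : nat -> series K),
       (1 <= c)%N /\ (forall j, (j < c)%N -> ult_geometric (Ss j)) /\ S = ser_merge c Ss.
Proof.
move=> c0 hG; exists c, (fun j k => S (k * c + j)%N); split => //; split.
  move=> j hj; exists N, (g j) => k hk.
  rewrite mulSn -addnA addnC hG; last by rewrite (leq_trans hk) // (leq_trans (leq_pmulr _ c0)) // leq_addr.
  by rewrite modnMDl modn_small.
by apply: serP => n; rewrite /ser_merge -divn_eq.
Qed.

Lemma form1_G (S : series K) c (Ss : nat -> series K) :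
  (1 <= c)%N -> (forall j, (j < c)%N -> ult_geometric (Ss j)) -> S = ser_merge c Ss -> G (S : sr).
Proof.
move=> c0 hU ->.
have hU' : forall j, (j < c)%N -> exists x : nat * K,
    forall k, (x.1 <= k)%N -> Ss j k.+1 = x.2 * Ss j k.
  by move=> j hj; case: (hU j hj) => kap [gam h]; exists (kap, gam).
case: (fin_choice (0%N, 0 : K) hU') => f hf.
exists c, (c * \sum_(j < c) (f j).1)%N, (fun j => (f j).2); split => // n hn.
rewrite /ser_merge modnDr divnDr // divnn c0 addn1.
apply: hf; first by rewrite ltn_pmod.
rewrite leq_divRL // (leq_trans _ hn) // mulnC leq_mul2l.
by rewrite (leq_bigsum (fun j => (f j).1)) ?orbT // ltn_pmod.
Qed.

End F.

Theorem theorem3 (K : comPzSemiRingType)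
  (Hidem : idempotent_sr K) (Hlin : linearly_ordered_sr K) (Harch : archimedian_sr K)
  (S : series K) :
  (rational S <->
     (exists (c : nat) (Ss : nat -> series K),
       (1 <= c)%N /\ (forall j, (j < c)%N -> ult_geometric (Ss j)) /\ S = ser_merge c Ss))
  /\
  (rational S <->
     (exists (kappa c : nat) (P : series K) (u q : nat -> K),
       (1 <= c)%N /\ (forall n, (kappa * c <= n)%N -> P n = 0) /\
       S = ser_add P
             (ser_mul (ser_Xn K (kappa * c))
                (ser_bigsum c (fun i =>
                   ser_mul (ser_mul (ser_C (u i)) (ser_Xn K i))
                           (ser_star (ser_mul (ser_C (q i)) (ser_Xn K c)))))))).
Proof.
split; split.
- move/(rational_G Hidem Hlin) => [c [N [g [c0 hG]]]]; exact: G_form1 c0 hG.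
- case=> c [Ss [c0 [hU hS]]].
  case: (form1_G c0 hU hS) => c' [N [g [c0' hG]]].
  case: (G_form2 c0' hG) => kappa [c2 [P [u [q [h1 [h2 h3]]]]]].
  exact: form2_rational h1 h2 h3.
- move/(rational_G Hidem Hlin) => [c [N [g [c0 hG]]]]; exact: G_form2 c0 hG.
- case=> kappa [c [P [u [q [h1 [h2 h3]]]]]]; exact: form2_rational h1 h2 h3.
Qed.
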